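(* Let $(M,\cdot,1)$ be a monoid, $\Sigma$ a finite alphabet, and $A=(Q,\Sigma,u,i_u,\delta,w,\rho)$ an accessible $M$-DFA. If there do not exist words $\alpha,\beta\in\Sigma^*$, an $M$-language $\ell'$ and elements $m,m'\in M$ such that $u\alpha\neq u\beta$, $\Delta_\alpha(\mathcal{A})=m\cdot\ell'$ and $\Delta_\beta(\mathcal{A})=m'\cdot\ell'$, then $A$ is minimal.
   Context: An $M$-language is a function $\Sigma^*\to M$; $(m\cdot\ell)(\gamma)=m\cdot\ell(\gamma)$ and $\Delta_\alpha(\ell)(\gamma)=\ell(\alpha\gamma)$. An $M$-DFA is $A=(Q,\Sigma,u,i_u,\delta,w,\rho)$ with $Q$ finite nonempty, initial state $u$, initial value $i_u\in M$, $\delta:Q\times\Sigma\to Q$, $w:Q\times\Sigma\to M$, $\rho:Q\to M$. Write $q\alpha$ for the extended transition and $w^*(q,\varepsilon)=1$, $w^*(q,\alpha\sigma)=w^*(q,\alpha)\cdot w(q\alpha,\sigma)$. $A$ recognizes $\mathcal{A}(\alpha)=i_u\cdot w^*(u,\alpha)\cdot\rho(u\alpha)$. $A$ is accessible if $Q=\{u\alpha\mid\alpha\in\Sigma^*\}$; two $M$-DFAs are equivalent if they recognize the same $M$-language; $A$ is minimal if no equivalent $M$-DFA has fewer states. *)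

(* Defs.v *)
From mathcomp Require Import all_boot.
Set Implicit Arguments. Unset Strict Implicit. Unset Printing Implicit Defensive.

Definition is_monoid (M : Type) (mul : M -> M -> M) (one : M) : Prop :=
  (forall a b c, mul a (mul b c) = mul (mul a b) c) /\
  (forall a, mul one a = a) /\ (forall a, mul a one = a).

Definition mlang (Sigma M : Type) := seq Sigma -> M.

Definition mscale (Sigma M : Type) (mul : M -> M -> M) (m : M)
  (l : mlang Sigma M) : mlang Sigma M := fun g => mul m (l g).

Definition Delta (Sigma M : Type) (a : seq Sigma) (l : mlang Sigma M)
  : mlang Sigma M := fun g => l (a ++ g).

(* M-DFA (Q, Sigma, u, i_u, delta, w, rho); Q finite nonempty (u : Q). *)
Record MDFA (Sigma : finType) (M : Type) := {
  st : finType;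
  init : st;
  ival : M;
  delta : st -> Sigma -> st;
  wt : st -> Sigma -> M;
  rho : st -> M }.

Section Ext.
Variables (Sigma : finType) (M : Type) (mul : M -> M -> M) (one : M).
Variable A : MDFA Sigma M.

Definition dstar (q : st A) (a : seq Sigma) : st A := foldl (@delta _ _ A) q a.

(* w*(q, eps) = 1, w*(q, alpha sigma) = w*(q, alpha) . w(q alpha, sigma) *)
Fixpoint wstar_acc (p : st A) (m : M) (a : seq Sigma) : M :=
  match a with
  | [::] => m
  | s :: a' => wstar_acc (@delta _ _ A p s) (mul m (@wt _ _ A p s)) a'
  end.
Definition wstar (q : st A) (a : seq Sigma) : M := wstar_acc q one a.

Definition recog : mlang Sigma M :=
  fun a => mul (mul (@ival _ _ A) (wstar (@init _ _ A) a)) (@rho _ _ A (dstar (@init _ _ A) a)).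

Definition accessible : Prop :=
  forall q : st A, exists a : seq Sigma, dstar (@init _ _ A) a = q.
End Ext.

Definition equivalent (Sigma : finType) (M : Type) (mul : M -> M -> M) (one : M)
  (A B : MDFA Sigma M) : Prop := recog mul one A = recog mul one B.

Definition minimal (Sigma : finType) (M : Type) (mul : M -> M -> M) (one : M)
  (A : MDFA Sigma M) : Prop :=
  forall B : MDFA Sigma M, equivalent mul one B A -> #|st A| <= #|st B|.

(* Main.v *)
Require Import Defs.
From mathcomp Require Import all_boot.
From Stdlib Require Import FunctionalExtensionality.

Lemma wacc_cat (M : Type) (mul : M -> M -> M) (Sigma : finType) (A : MDFA Sigma M)
  (a g : seq Sigma) : forall (p : st A) (m : M),
  wstar_acc mul p m (a ++ g) = wstar_acc mul (dstar p a) (wstar_acc mul p m a) g.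
Proof. elim: a => [|s a IH] p m //=. Qed.

Lemma wacc_one (M : Type) (mul : M -> M -> M) (one : M)
  (HM : is_monoid mul one) (Sigma : finType) (A : MDFA Sigma M)
  (g : seq Sigma) : forall (p : st A) (m : M),
  wstar_acc mul p m g = mul m (wstar_acc mul p one g).
Proof.
case: HM => [As [Hl Hr]].
elim: g => [|s g IH] p m /=; first by rewrite Hr.
by rewrite IH (IH _ (mul one _)) Hl As.
Qed.

Theorem mainTheorem9 (M : Type) (mul : M -> M -> M) (one : M)
  (HM : is_monoid mul one) (Sigma : finType) (A : MDFA Sigma M) :
  accessible A ->
  ~ (exists (a b : seq Sigma) (l' : mlang Sigma M) (m m' : M),
       dstar (init A) a <> dstar (init A) b /\
       Delta a (recog mul one A) = mscale mul m l' /\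
       Delta b (recog mul one A) = mscale mul m' l') ->
  minimal mul one A.
Proof.
move=> Hacc Hno B Heq.
have HM' := HM; case: HM' => [As [Hl Hr]].
have Hacc' : forall q : st A, exists a : seq Sigma, dstar (init A) a == q.
  by move=> q; case: (Hacc q) => a <-; exists a.
pose w (q : st A) : seq Sigma := xchoose (Hacc' q).
have wP q : dstar (init A) (w q) = q by apply/eqP; exact: xchooseP (Hacc' q).
pose f (q : st A) : st B := dstar (init B) (w q).
have key : forall a : seq Sigma, Delta a (recog mul one A) =
   mscale mul (mul (ival B) (wstar mul one (init B) a))
     (fun g => mul (wstar mul one (dstar (init B) a) g) (rho (dstar (dstar (init B) a) g))).
  move=> a; rewrite -Heq /Delta /mscale /recog /=.
  apply: functional_extensionality => g.
  rewrite /wstar wacc_cat (@wacc_one M mul one HM Sigma B g (dstar (init B) a)).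
  rewrite /dstar foldl_cat -!As //.
have finj : injective f.
  move=> q q' Hf; case: (eqVneq q q') => // Hne; exfalso; apply: Hno.
  exists (w q), (w q'), (fun g => mul (wstar mul one (dstar (init B) (w q)) g)
        (rho (dstar (dstar (init B) (w q)) g))).
  exists (mul (ival B) (wstar mul one (init B) (w q))),
         (mul (ival B) (wstar mul one (init B) (w q'))).
  split; first by rewrite !wP; apply/eqP.
  split; first exact: key.
  by rewrite key; have -> : dstar (init B) (w q') = dstar (init B) (w q) by [].
exact: leq_card finj.
Qed.
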